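(* Let $t$ be a positive integer and $w$ an integer with $\lceil (t+1)/2\rceil\le w\le t$. Then $$ma_t(w)\ge \frac{w}{2t}+\frac{\lfloor (t-1)/2\rfloor}{2t}.$$
   Context: A voter matrix with $t$ topics is a matrix $V\in\{Y,N\}^{n\times t}$ for some positive integer $n$ (rows are voters), subject to the standing assumption that in every column the number of entries $Y$ is at least the number of entries $N$. $\mathcal{V}_t$ is the set of all voter matrices with $t$ topics and any number of voters. A proposal is a vector $p\in\{Y,N\}^t$. A voter $v$ supports $p$ if the Hamming distance between $v$ and $p$ is at most $t/2$; $p$ is supported by $V$ if at least $n/2$ rows of $V$ support $p$. $md_V$ is the maximum number of entries $Y$ of a proposal supported by $V$. $m_V$ denotes the fraction of entries $Y$ among all $nt$ entries of $V$. For an integer $w$ with $\lceil (t+1)/2\rceil\le w\le t$, $ma_t(w)$ is the supremum of $m_V$ over all $V\in\mathcal{V}_t$ with $md_V<w$, with the convention that $ma_t(w)=\frac12$ if no such $V$ exists. *)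

(* Defs.v *)
From HB Require Import structures.
From mathcomp Require Import all_boot all_order all_algebra.
From mathcomp Require Import boolp classical_sets reals.
Set Implicit Arguments. Unset Strict Implicit. Unset Printing Implicit Defensive.
Import Order.TTheory GRing.Theory Num.Theory.

(* Entries: true = Y, false = N.  A voter matrix has n rows (voters), t columns
   (topics), n > 0, and in every column #Y >= #N. *)
Definition voter_matrix (n t : nat) (V : 'M[bool]_(n, t)) : Prop :=
  (0 < n)%N /\
  forall j : 'I_t, (#|[pred i : 'I_n | ~~ V i j]| <= #|[pred i : 'I_n | V i j]|)%N.

Definition proposal (t : nat) := {ffun 'I_t -> bool}.

Definition hamming n t (V : 'M[bool]_(n, t)) (i : 'I_n) (p : proposal t) : nat :=
  #|[pred j : 'I_t | V i j != p j]|.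

(* voter i supports p iff dist <= t/2, i.e. 2*dist <= t. *)
Definition supports n t (V : 'M[bool]_(n, t)) (i : 'I_n) (p : proposal t) : bool :=
  (2 * hamming V i p <= t)%N.

(* p supported by V iff at least n/2 voters support p. *)
Definition supported n t (V : 'M[bool]_(n, t)) (p : proposal t) : bool :=
  (n <= 2 * #|[pred i : 'I_n | supports V i p]|)%N.

Definition numY t (p : proposal t) : nat := #|[pred j : 'I_t | p j]|.

(* md_V : maximum number of Y's of a proposal supported by V
   (default 0 if no proposal is supported). *)
Definition md n t (V : 'M[bool]_(n, t)) : nat :=
  (\max_(p : proposal t | supported V p) numY p)%N.

Local Open Scope ring_scope.

Definition mV (R : realType) n t (V : 'M[bool]_(n, t)) : R :=
  (#|[pred ij : 'I_n * 'I_t | V ij.1 ij.2]|)%:R / (n * t)%:R.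

Definition ma_set (R : realType) (t w : nat) : set R :=
  [set x | exists (n : nat) (V : 'M[bool]_(n, t)),
      voter_matrix V /\ (md V < w)%N /\ x = @mV R n t V].

Definition ma (R : realType) (t w : nat) : R :=
  if asbool (exists x, @ma_set R t w x) then sup (@ma_set R t w) else 2^-1.

(* Main.v *)
Require Import Defs.
From HB Require Import structures.
From mathcomp Require Import all_boot all_order all_algebra.
From mathcomp Require Import boolp classical_sets reals.
From mathcomp Require Import zify ring lra.
Import Order.TTheory GRing.Theory Num.Theory.

Lemma cardE_sum (T : finType) (P : pred T) : #|P| = \sum_(x : T) (P x : nat).
Proof.
rewrite -sum1_card big_mkcond /=; apply: eq_bigr => x _.
by rewrite unfold_in; case: (P x).
Qed.

Lemma sum_window n s e : \sum_(j < n) ((s <= j) && (j < e) : nat) = minn n e - s.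
Proof.
elim: n => [|n IH]; first by rewrite big_ord0 min0n.
rewrite big_ord_recr /= IH.
case: (leqP s n) => Hs; case: (ltnP n e) => He /=; lia.
Qed.

Lemma count_pairs n t (V : 'M[bool]_(n, t)) :
  #|[pred ij : 'I_n * 'I_t | V ij.1 ij.2]| = \sum_i \sum_j (V i j : nat).
Proof.
rewrite cardE_sum pair_bigA /=; apply: eq_bigr => -[i j] _ //.
Qed.

Lemma sum_lt n c : \sum_(j < n) (j < c : nat) = minn n c.
Proof. by rewrite -(subn0 (minn n c)) -sum_window. Qed.

Definition lo (t b c i : nat) := if i < c then 0 else if i < c + t then i - c else 0.
Definition hi (t b c i : nat) := if i < c then t else if i < c + t then i - c + b else b.
Definition VM t b c : 'M[bool]_((c + c).+1, t) :=
  \matrix_(i, j) ((lo t b c i <= j) && (j < hi t b c i)).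

Lemma row_sum t b c i : \sum_j (VM t b c i j : nat) = minn t (hi t b c i) - lo t b c i.
Proof.
rewrite -sum_window; apply: eq_bigr => j _; by rewrite mxE.
Qed.

Lemma poor_row t b c (i : 'I_(c + c).+1) : c <= i -> \sum_j (VM t b c i j : nat) <= b.
Proof.
move=> ci; rewrite row_sum /lo /hi ltnNge ci /=.
case H2: (i < c + t) => /=; lia.
Qed.

Lemma row_lb t b c (i : 'I_(c + c).+1) : b <= t ->
  ((0 <= i) && (i < c)) * t + ((c + t <= i) && (i < (c + c).+1)) * b <= \sum_j (VM t b c i j : nat).
Proof.
move=> bt; rewrite row_sum /lo /hi.
have := ltn_ord i.
case H1: (i < c); case H2: (i < c + t) => /=; lia.
Qed.

Lemma total_lb t b c : b <= t -> t <= c ->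
  c * t + ((c + c).+1 - (c + t)) * b <= \sum_i \sum_j (VM t b c i j : nat).
Proof.
move=> bt tc.
have E : c * t + ((c + c).+1 - (c + t)) * b = \sum_(i < (c + c).+1)
  (((0 <= i) && (i < c)) * t + ((c + t <= i) && (i < (c + c).+1)) * b).
  rewrite big_split /= -!big_distrl /= !sum_window ?sum_lt. lia.
rewrite E; apply: leq_sum => i _; exact: row_lb.
Qed.

Lemma col_lb t b c (j : 'I_t) : 1 <= b -> t <= c ->
  c.+1 <= \sum_i (VM t b c i j : nat).
Proof.
move=> b1 tc.
have H : forall i : 'I_(c + c).+1,
   ((0 <= i) && (i < c) : nat) + ((c + j <= i) && (i < c + j + 1) : nat) <= VM t b c i j.
  move=> i; rewrite mxE /lo /hi.
  have := ltn_ord j.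
  case H1: (i < c); case H2: (i < c + t) => /=; lia.
have E : c.+1 = \sum_(i < (c + c).+1)
   (((0 <= i) && (i < c) : nat) + ((c + j <= i) && (i < c + j + 1) : nat)).
  rewrite big_split /= !sum_window ?sum_lt. have := ltn_ord j. lia.
rewrite E; apply: leq_sum => i _; exact: H.
Qed.

Lemma sumC n t (V : 'M[bool]_(n, t)) j :
  \sum_i (~~ V i j : nat) + \sum_i (V i j : nat) = n.
Proof.
rewrite -big_split /=.
transitivity (\sum_(i < n) 1); last by rewrite sum1_card card_ord.
by apply: eq_bigr => i _; case: (V i j).
Qed.

Lemma VM_voter t b c : 1 <= b -> t <= c -> voter_matrix (VM t b c).
Proof.
move=> b1 tc; split => // j.
rewrite !cardE_sum /=.
have H := @col_lb t b c j b1 tc.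
have E := @sumC _ _ (VM t b c) j.
rewrite -[X in X <= _]/(\sum_i (~~ VM t b c i j : nat)) -[X in _ <= X]/(\sum_i (VM t b c i j : nat)). lia.
Qed.

Lemma ham_bound n t (V : 'M[bool]_(n, t)) i p :
  numY p <= hamming V i p + \sum_j (V i j : nat).
Proof.
rewrite /numY /hamming !cardE_sum -big_split; apply: leq_sum => j _ /=.
by case: (p j); case: (V i j).
Qed.

Lemma half_le t : t <= t./2 * 2 + 1.
Proof. have := odd_double_half t; rewrite -muln2; case: (odd t) => /=; lia. Qed.

Lemma VM_md t b c w : 1 <= b -> b <= t -> t <= c -> w = b + 1 + t./2 ->
  md (VM t b c) < w.
Proof.
move=> b1 bt tc ->.
suff: md (VM t b c) <= b + t./2 by lia.
apply/bigmax_leqP => p Hp; rewrite leqNgt; apply/negP => Hw.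
move: Hp; rewrite /supported.
have : #|[pred i | supports (VM t b c) i p]| <= c.
  rewrite cardE_sum.
  apply: (@leq_trans (\sum_(i < (c + c).+1) (i < c : nat))); last by rewrite sum_lt; lia.
  apply: leq_sum => i _ /=.
  case: (ltnP i c) => ic; first by case: supports.
  rewrite /supports.
  have := @ham_bound _ _ (VM t b c) i p.
  have := @poor_row t b c i ic.
  have := half_le t.
  case: leqP => //; lia.
lia.
Qed.

Lemma count_le n t (V : 'M[bool]_(n, t)) :
  #|[pred ij : 'I_n * 'I_t | V ij.1 ij.2]| <= n * t.
Proof. by apply: leq_trans (max_card _) _; rewrite card_prod !card_ord. Qed.

Lemma count_ge n t (V : 'M[bool]_(n, t)) : voter_matrix V ->
  n * t <= 2 * #|[pred ij : 'I_n * 'I_t | V ij.1 ij.2]|.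
Proof.
move=> [_ Hc]; rewrite count_pairs exchange_big /= big_distrr /=.
have -> : n * t = \sum_(j < t) n by rewrite sum_nat_const card_ord mulnC.
apply: leq_sum => j _.
have := Hc j; rewrite !cardE_sum /=.
have E := @sumC _ _ V j.
rewrite -[X in X <= _ -> _]/(\sum_i (~~ V i j : nat)) -[X in _ <= X -> _]/(\sum_i (V i j : nat)).
rewrite -[X in _ -> _ <= 2 * X]/(\sum_i (V i j : nat)). lia.
Qed.

Local Open Scope ring_scope.

Lemma mV_ge_half (R : realType) n t (V : 'M[bool]_(n, t)) : (0 < t)%N -> voter_matrix V ->
  2^-1 <= mV R V.
Proof.
move=> t0 HV; have := @count_ge _ _ V HV; have n0 := proj1 HV.
rewrite /mV; set Y := #|_|.
move=> H.
have Hpos : (0 : R) < (n * t)%:R by rewrite ltr0n muln_gt0 n0 t0.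
rewrite ler_pdivlMr //.
have : ((n * t)%:R : R) <= 2 * Y%:R by rewrite -natrM ler_nat.
lra.
Qed.

Lemma mV_le1 (R : realType) n t (V : 'M[bool]_(n, t)) : (0 < t)%N -> voter_matrix V ->
  mV R V <= 1.
Proof.
move=> t0 HV; have n0 := proj1 HV.
rewrite /mV.
have Hpos : (0 : R) < (n * t)%:R by rewrite ltr0n muln_gt0 n0 t0.
by rewrite ler_pdivrMr // mul1r ler_nat count_le.
Qed.

Lemma half_sum t : (0 < t)%N -> ((t.-1)./2 + t./2)%N = t.-1.
Proof.
case: t => [//|t] _ /=.
rewrite uphalf_half; have := odd_double_half t; rewrite -muln2.
case: (odd t) => /=; lia.
Qed.

Local Open Scope ring_scope.

Lemma key (R : realType) t b c : (1 <= b)%N -> (b <= t)%N -> (t <= c)%N ->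
  (t + b)%:R / (2 * t)%:R <=
  mV R (VM t b c) + (t + 2 * t * b)%:R / ((2 * t) * (c + c).+1)%:R :> R.
Proof.
move=> b1 bt tc.
have t0 : (0 < t)%N by lia.
have := @total_lb t b c bt tc; rewrite -count_pairs /mV.
set Y := #|_| => HY.
have Hn : ((t + b) * (c + c).+1 <= 2 * Y + (t + 2 * t * b))%N by nia.
have D0 : (0 : R) < ((2 * t) * (c + c).+1)%:R by rewrite ltr0n; lia.
have E1 : (t + b)%:R / (2 * t)%:R = ((t + b) * (c + c).+1)%:R / ((2 * t) * (c + c).+1)%:R :> R.
  rewrite !natrM; field.
  apply/andP; split; apply: lt0r_neq0; [have := ler0n R c; lra| by rewrite ltr0n].
have E2 : Y%:R / ((c + c).+1 * t)%:R = (2 * Y)%:R / ((2 * t) * (c + c).+1)%:R :> R.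
  rewrite !natrM; field.
  apply/andP; split; apply: lt0r_neq0; [have := ler0n R c; lra| by rewrite ltr0n].
rewrite E1 E2 -mulrDl ler_pM2r ?invr_gt0 // -natrD ler_nat //.
Qed.

Theorem lemma5p9 (R : realType) (t w : nat) :
  (0 < t)%N -> ((t.+2)./2 <= w)%N -> (w <= t)%N ->
  w%:R / (2 * t)%:R + ((t.-1)./2)%:R / (2 * t)%:R <= @ma R t w.
Proof.
move=> t0 hw wt.
set k := (t.-1)./2.
have hk := @half_sum t t0.
have h2 : (t.+2)./2 = (t./2).+1 by [].
rewrite h2 in hw.
have S_ub : ubound (@ma_set R t w) 1.
  by move=> x [n [V [HV [_ ->]]]]; exact: mV_le1.
have hub : has_ubound (@ma_set R t w) by exists 1.
have T0 : (0 : R) < (2 * t)%:R by rewrite ltr0n; lia.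
rewrite -mulrDl -natrD.
case: (leqP (w + k) t) => Hc.
  apply: (@le_trans _ _ 2^-1).
    rewrite ler_pdivrMr // natrM.
    have : ((w + k)%:R : R) <= t%:R by rewrite ler_nat.
    lra.
  rewrite /ma; case: asboolP => [[x Sx]|_]; last by [].
  apply: le_trans (ub_le_sup hub Sx).
  by case: Sx => n [V [HV [_ ->]]]; exact: mV_ge_half.
set b := (w - 1 - t./2)%N.
have b1 : (1 <= b)%N by lia.
have bt : (b <= t)%N by lia.
have wb : w = (b + 1 + t./2)%N by lia.
have wk : (w + k = t + b)%N by lia.
rewrite wk.
have mem : forall c, (t <= c)%N -> @ma_set R t w (mV R (VM t b c)).
  move=> c tc; exists (c + c).+1, (VM t b c); split; first exact: VM_voter.
  by split => //; exact: VM_md.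
have -> : @ma R t w = sup (@ma_set R t w).
  by rewrite /ma asboolT //; exists (mV R (VM t b t)); exact: mem.
rewrite leNgt; apply/negP => Hlt.
set s := sup _ in Hlt.
set d := (t + b)%:R / (2 * t)%:R - s.
have d0 : 0 < d by rewrite subr_gt0.
set K := (t + 2 * t * b)%N.
set c := maxn t (Num.bound (K%:R / d)).
have tc : (t <= c)%N by rewrite leq_maxl.
have Hk := @key R t b c b1 bt tc.
have Hm : mV R (VM t b c) <= s := ub_le_sup hub (mem c tc).
set D := (2 * t * (c + c).+1)%N.
have D0 : (0 : R) < D%:R by rewrite ltr0n; lia.
have H1 : d <= K%:R / D%:R.
  move: Hk Hm; rewrite /d /K /D /s.
  move: ((t + b)%:R / (2 * t)%:R) (mV R (VM t b c)) ((t + 2 * t * b)%:R / (2 * t * (c + c).+1)%:R) (sup (@ma_set R t w)) => x1 x2 x3 x4.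
  lra.
rewrite ler_pdivlMr // in H1.
have H2 : K%:R / d < D%:R.
  apply: lt_le_trans (archi_boundP _) _; first by apply: divr_ge0 => //; exact: ltW.
  rewrite ler_nat /D; have := leq_maxr t (Num.bound (K%:R / d)); rewrite -/c; move: (Num.bound _) => x; nia.
rewrite ltr_pdivrMr // in H2.
by rewrite mulrC in H2; have := lt_le_trans H2 H1; rewrite ltxx.
Qed.
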